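(* In the setting described in the context, if type B blowup occurs, then either $0<v_0<1$ and $\omega_0<-\frac{\nu}{2}f_\infty(v_0)$, or $v_0>1$ and $\omega_0>-\frac{\nu}{2}f_\infty(v_0)$.
   Context: Fix $\nu>0$, $v_0>0$ with $v_0\neq1$, and $\omega_0\in\mathbb{R}$. Consider the real ODE system $\frac{d\omega_{-2,i}}{dt}=\omega_{-2,i}^2\frac{1-2v_c^2+5v_c^4}{4v_c^2(1-v_c^2)^2}-\nu\omega_{-2,i}$, $\frac{dv_c}{dt}=-\omega_{-2,i}\frac{1+v_c^2}{4v_c(1-v_c^2)}$ with $v_c(0)=v_0$, $\omega_{-2,i}(0)=\omega_0$; its solution (continued through $v_c=1$) is characterized as follows. Let $F(v)=\frac{v(v^2-1)}{(v^2+1)^2}+\arctan v$, which is a strictly increasing bijection from $(0,\infty)$ onto $(0,\pi/2)$, and let $G(t)=F(v_0)+\frac{2\omega_0 v_0(1-e^{-\nu t})}{\nu(v_0^2-1)(v_0^2+1)^2}$. Then $v_c(t)$ is defined by $F(v_c(t))=G(t)$ for as long as $G(t)\in(0,\pi/2)$, and $\omega_{-2,i}(t)=\omega_0e^{-\nu t}\frac{v_0}{v_c(t)}\frac{v_c(t)^2-1}{v_0^2-1}\left(\frac{v_c(t)^2+1}{v_0^2+1}\right)^2$. Type A blowup means: there is a finite $t_c>0$ with $v_c(t)>0$ on $[0,t_c)$ and $v_c(t)\to0^+$ as $t\to t_c^-$. Type B blowup means: there is a finite $t_c>0$ with $v_c(t)\in(0,\infty)$ on $[0,t_c)$ and $v_c(t)\to+\infty$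 as $t\to t_c^-$. Here $f_0(x)=(x^2-1)^2+\frac{(x^2+1)^2}{x}(x^2-1)\arctan(x)$ and $f_\infty(x)=(x^2-1)^2+\frac{(x^2+1)^2}{x}(x^2-1)\left(\arctan(x)-\frac{\pi}{2}\right)$ for $x>0$. *)

(* Defs.v *)
From Stdlib Require Import Reals Lra.
From Coquelicot Require Import Coquelicot.
Open Scope R_scope.

Definition Fv (v : R) : R := v * (v ^ 2 - 1) / (v ^ 2 + 1) ^ 2 + atan v.

Definition Gt (nu v0 w0 t : R) : R :=
  Fv v0 + 2 * w0 * v0 * (1 - exp (- nu * t))
          / (nu * (v0 ^ 2 - 1) * (v0 ^ 2 + 1) ^ 2).

Definition f_inf (x : R) : R :=
  (x ^ 2 - 1) ^ 2 + (x ^ 2 + 1) ^ 2 / x * (x ^ 2 - 1) * (atan x - PI / 2).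

Definition typeB_blowup (nu v0 w0 : R) : Prop :=
  exists (vc : R -> R) (tc : R),
    0 < tc /\
    (forall t, 0 <= t < tc -> 0 < vc t /\ Fv (vc t) = Gt nu v0 w0 t) /\
    filterlim vc (at_left tc) (Rbar_locally p_infty).

(* Main.v *)
Require Import Defs.
From Stdlib Require Import Reals Lra.
From Coquelicot Require Import Coquelicot.
Open Scope R_scope.

Lemma atan_le_id u : 0 < u -> atan u <= u.
Proof.
  intros Hu.
  destruct (MVT_cor2 atan (fun x => / (1 + x^2)) 0 u Hu) as [c [Hc Hc2]].
  { intros; apply derivable_pt_lim_atan. }
  rewrite atan_0 in Hc.
  assert (0 < / (1 + c^2) <= 1).
  { split. apply Rinv_0_lt_compat; nra.
    rewrite <- Rinv_1; apply Rinv_le_contravar; nra. }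
  nra.
Qed.

Lemma atan_ge_cubic u : 0 < u -> u - u^3/3 <= atan u.
Proof.
  intros Hu.
  destruct (MVT_cor2 (fun x => atan x - x + x^3/3) (fun x => / (1 + x^2) - 1 + x^2) 0 u Hu) as [c [Hc Hc2]].
  { intros c _.
    replace (/ (1 + c^2) - 1 + c^2) with ((/ (1 + c^2) - 1) + (INR 3 * c^(pred 3) * / 3)).
    2:{ simpl; field; nra. }
    apply (derivable_pt_lim_plus (fun x => atan x - x) (fun x => x^3/3)).
    apply (derivable_pt_lim_minus atan id). apply derivable_pt_lim_atan. apply derivable_pt_lim_id.
    apply (derivable_pt_lim_scal_right (fun x => x^3)). apply derivable_pt_lim_pow. }
  rewrite atan_0 in Hc.
  assert (0 <= / (1 + c^2) - 1 + c^2).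
  { replace (/ (1 + c^2) - 1 + c^2) with (c^4 / (1 + c^2)) by (field; nra).
    apply Rdiv_le_0_compat; nra. }
  nra.
Qed.

Lemma Fv_lt v : 0 < v -> Fv v < PI / 2.
Proof.
  intros Hv. unfold Fv.
  assert (HK : 0 < (v ^ 2 + 1) ^ 2) by (apply pow_lt; nra).
  destruct (Rle_lt_dec v 1) as [H1|H1].
  - assert (v * (v ^ 2 - 1) / (v ^ 2 + 1) ^ 2 <= 0).
    { unfold Rdiv. assert (0 < / (v ^ 2 + 1) ^ 2) by (apply Rinv_0_lt_compat; lra).
      assert (v * (v ^ 2 - 1) <= 0) by nra. nra. }
    destruct (atan_bound v). lra.
  - set (u := / v).
    assert (Hu : 0 < u < 1).
    { unfold u; split. apply Rinv_0_lt_compat; lra.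
      rewrite <- Rinv_1; apply Rinv_lt_contravar; lra. }
    assert (Ha : atan v = PI/2 - atan u).
    { unfold u. rewrite atan_inv by lra. ring. }
    assert (Hr : v * (v ^ 2 - 1) / (v ^ 2 + 1) ^ 2 = u * (1 - u^2) / (1 + u^2)^2).
    { unfold u. field. split; nra. }
    assert (Hc := atan_ge_cubic u (proj1 Hu)).
    assert (H2 : u * (1 - u^2) / (1 + u^2)^2 <= u * (1 - u^2)).
    { unfold Rdiv. assert (0 <= u * (1 - u^2)) by nra.
      assert (/ (1 + u^2)^2 <= 1).
      { rewrite <- Rinv_1; apply Rinv_le_contravar. lra. nra. }
      nra. }
    assert (0 < u^3) by (apply pow_lt; lra).
    rewrite Ha, Hr. nra.
Qed.

Lemma Fv_ge v : 1 <= v -> PI / 2 - / v <= Fv v.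
Proof.
  intros Hv. unfold Fv.
  assert (HK : 0 < (v ^ 2 + 1) ^ 2) by (apply pow_lt; nra).
  assert (0 <= v * (v ^ 2 - 1) / (v ^ 2 + 1) ^ 2).
  { unfold Rdiv. assert (0 < / (v ^ 2 + 1) ^ 2) by (apply Rinv_0_lt_compat; lra).
    assert (0 <= v * (v ^ 2 - 1)) by nra. nra. }
  assert (Ha : atan v = PI/2 - atan (/ v)) by (rewrite atan_inv by lra; ring).
  assert (atan (/ v) <= / v) by (apply atan_le_id, Rinv_0_lt_compat; lra).
  lra.
Qed.

Lemma exp_le_exp x y : x <= y -> exp x <= exp y.
Proof. intros [H|H]. left; apply exp_increasing; auto. subst; lra. Qed.

Theorem lemma3p4 (nu v0 w0 : R) :
  0 < nu -> 0 < v0 -> v0 <> 1 ->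
  typeB_blowup nu v0 w0 ->
  (0 < v0 < 1 /\ w0 < - (nu / 2) * f_inf v0) \/
  (1 < v0 /\ w0 > - (nu / 2) * f_inf v0).
Proof.
  intros Hnu Hv0 Hv1 [vc [tc [Htc [Hsol Hlim]]]].
  assert (HK : 0 < (v0 ^ 2 + 1) ^ 2) by (apply pow_lt; nra).
  assert (Hq : v0 ^ 2 - 1 <> 0).
  { intro E. apply Hv1. assert ((v0 - 1) * (v0 + 1) = 0) by (rewrite <- E; ring).
    destruct (Rmult_integral _ _ H); lra. }
  set (c := 2 * w0 * v0 / (nu * (v0 ^ 2 - 1) * (v0 ^ 2 + 1) ^ 2)).
  set (D := PI / 2 - Fv v0).
  assert (HD : 0 < D) by (unfold D; pose proof (Fv_lt v0 Hv0); lra).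
  assert (HG : forall t, Gt nu v0 w0 t = Fv v0 + c * (1 - exp (- nu * t))).
  { intro t. unfold Gt, c. field. repeat split; try lra; try exact Hq. nra. }
  set (s := 1 - exp (- nu * tc)).
  assert (Hs : 0 < s < 1).
  { unfold s. split.
    - assert (exp (- nu * tc) < 1); [|lra].
      rewrite <- exp_0. apply exp_increasing. nra.
    - pose proof (exp_pos (- nu * tc)); lra. }
  assert (HcD : D < c).
  { destruct (Rlt_le_dec D c) as [?|Hle]; [assumption|exfalso].
    set (M := Rmax (Fv v0) (Fv v0 + c * s)).
    assert (HM : M < PI / 2).
    { unfold M. apply Rmax_lub_lt. unfold D in HD; lra.
      unfold D in HD, Hle. destruct (Rle_lt_dec c 0). nra. nra. }
    assert (HB : forall t, 0 <= t < tc -> Fv (vc t) <= M).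
    { intros t Ht. destruct (Hsol t Ht) as [_ E]. rewrite E, HG.
      assert (Hst : 0 <= 1 - exp (- nu * t) <= s).
      { unfold s. split.
        - assert (exp (- nu * t) <= 1); [|lra].
          rewrite <- exp_0. apply exp_le_exp. nra.
        - assert (exp (- nu * tc) <= exp (- nu * t)); [|lra].
          apply exp_le_exp. nra. }
      unfold M. destruct (Rle_lt_dec c 0).
      + eapply Rle_trans; [|apply Rmax_l]. nra.
      + eapply Rle_trans; [|apply Rmax_r]. nra. }
    set (V := 1 + / (PI / 2 - M)).
    assert (HV0 : 0 < / (PI / 2 - M)) by (apply Rinv_0_lt_compat; lra).
    assert (HE : at_left tc (fun t => V < vc t)).
    { apply Hlim. exists V. auto. }
    destruct HE as [d Hd].
    set (y := Rmax (tc - d / 2) (tc / 2)).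
    assert (Hy1 : tc / 2 <= y) by apply Rmax_r.
    assert (Hy2 : tc - d / 2 <= y) by apply Rmax_l.
    assert (Hy3 : y < tc).
    { unfold y. apply Rmax_lub_lt. destruct d; simpl; lra. lra. }
    assert (Hvy : V < vc y).
    { apply Hd; [|exact Hy3].
      unfold ball; simpl; unfold AbsRing_ball, abs, minus, plus, opp; simpl.
      rewrite Rabs_left; destruct d; simpl in *; lra. }
    assert (Hfy := HB y (conj (ltac:(lra) : 0 <= y) Hy3)).
    assert (Hge := Fv_ge (vc y) ltac:(unfold V in Hvy; lra)).
    assert (/ vc y < PI / 2 - M).
    { rewrite <- (Rinv_inv (PI / 2 - M)). apply Rinv_lt_contravar.
      apply Rmult_lt_0_compat; [lra|]. unfold V in Hvy; lra.
      unfold V in Hvy; lra. }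
    lra. }
  assert (Hid : w0 - (- (nu / 2) * f_inf v0) =
          (c - D) * (nu * (v0 ^ 2 - 1) * (v0 ^ 2 + 1) ^ 2 / (2 * v0))).
  { unfold c, D, f_inf, Fv. field. repeat split; try lra; try exact Hq. nra. }
  assert (HP : 0 < nu * (v0 ^ 2 + 1) ^ 2 / (2 * v0)).
  { unfold Rdiv. apply Rmult_lt_0_compat. nra. apply Rinv_0_lt_compat; lra. }
  destruct (Rlt_le_dec v0 1) as [Hlt|Hge].
  - left. split; [lra|].
    assert (v0 ^ 2 - 1 < 0) by nra.
    assert ((c - D) * (nu * (v0 ^ 2 - 1) * (v0 ^ 2 + 1) ^ 2 / (2 * v0)) =
            (c - D) * (v0 ^ 2 - 1) * (nu * (v0 ^ 2 + 1) ^ 2 / (2 * v0))) by (field; lra).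
    assert ((c - D) * (v0 ^ 2 - 1) < 0) by nra.
    nra.
  - right. split; [lra|].
    assert (0 < v0 ^ 2 - 1) by nra.
    assert ((c - D) * (nu * (v0 ^ 2 - 1) * (v0 ^ 2 + 1) ^ 2 / (2 * v0)) =
            (c - D) * (v0 ^ 2 - 1) * (nu * (v0 ^ 2 + 1) ^ 2 / (2 * v0))) by (field; lra).
    assert (0 < (c - D) * (v0 ^ 2 - 1)) by nra.
    nra.
Qed.
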